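(* Let $k\ge 2$ be even, let $\alpha_1,\dots,\alpha_k$ be positive integers with $n=\alpha_1+\cdots+\alpha_k$, let $G=C(\alpha_1,\dots,\alpha_k)$, and let $Q_L$ be the quotient matrix of its Laplacian with respect to the partition $\pi=\{\pi_1,\dots,\pi_k\}$. Then the eigenvalues of $Q_L$, listed as $\lambda_1\le\lambda_2\le\cdots\le\lambda_k$, are determined by $\lambda_1=0$, $\lambda_k=n$ and $$\lambda_i=\lambda_{i-1}+\alpha_{k-2(i-2)}\quad (i=2,3,\dots,\tfrac{k}{2}),\qquad \lambda_i=\lambda_{i+1}-\alpha_{2i-(k-1)}\quad (i=k-1,k-2,\dots,\tfrac{k}{2}+1).$$ (Explicitly, $\lambda_i=\alpha_k+\alpha_{k-2}+\cdots+\alpha_{k-2i+4}$ for $2\le i\le k/2$, and $\lambda_{k/2+i}=\sum_{l=1}^{k/2}\alpha_{2l}+\sum_{m=1}^{i}\alpha_{2m-1}$ for $1\le i\le k/2$.) Each of these is also a Laplacian eigenvalue of $G$.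
   Context: For positive integers $\alpha_1,\dots,\alpha_k$, the graph $C(\alpha_1,\dots,\alpha_k)$ is defined recursively by $C(\alpha_1)=\overline{K_{\alpha_1}}$ (the edgeless graph on $\alpha_1$ vertices) and $C(\alpha_1,\dots,\alpha_i)=\overline{C(\alpha_1,\dots,\alpha_{i-1})\cup K_{\alpha_i}}$ for $i=2,\dots,k$, where $\cup$ is disjoint union and the bar denotes graph complement. Let $\pi_i$ be the set of $\alpha_i$ vertices introduced at step $i$ (for $i=1$, the vertices of $C(\alpha_1)$). When $k$ is even (standing assumption), equivalently: $\pi_i$ induces a clique if $i$ is odd and an independent set if $i$ is even, and for $i<j$ a vertex of $\pi_i$ and a vertex of $\pi_j$ are adjacent iff $j$ is even. Such graphs (with $k$ even) are called $\mathcal{C}$-graphs. $L=D-A$ is the Laplacian matrix. The quotient matrix $Q_L$ is the $k\times k$ matrix with $(Q_L)_{ij}=\sum_{v\in\pi_j}L_{uv}$ for any $u\in\pi_i$ (this is independent of the choice of $u$). *)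

(* Defs.v *)
From mathcomp Require Import all_boot all_order all_algebra.
Set Implicit Arguments. Unset Strict Implicit. Unset Printing Implicit Defensive.
Import Order.TTheory GRing.Theory Num.Theory.
Local Open Scope ring_scope.

(* Parts are indexed 1..k as in the paper; alpha i = alpha_i for 1 <= i <= k
   (values of alpha outside 1..k are irrelevant). Vertices are 0..n-1 with
   n = alpha_1 + ... + alpha_k, and pi_i = [apsum (i-1), apsum i). *)

Definition apsum (alpha : nat -> nat) (i : nat) : nat :=
  (\sum_(1 <= l < i.+1) alpha l)%N.

Definition in_part (alpha : nat -> nat) (i v : nat) : bool :=
  (apsum alpha i.-1 <= v < apsum alpha i)%N.

(* adjacency pattern between parts i and j (1-based):
   pi_i is a clique iff i odd (independent iff i even);
   for i <> j, pi_i and pi_j are completely joined iff max(i,j) is even *)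
Definition part_rel (i j : nat) : bool :=
  if i == j then odd i else ~~ odd (maxn i j).

Definition cadj (alpha : nat -> nat) (k n : nat) : rel 'I_n :=
  fun u v => (u != v) &&
    [exists i : 'I_k, exists j : 'I_k,
       [&& in_part alpha i.+1 u, in_part alpha j.+1 v & part_rel i.+1 j.+1]].

Definition laplacian (R : nzRingType) (n : nat) (adj : rel 'I_n) : 'M[R]_n :=
  \matrix_(u, v) (if u == v then (#|[set w | adj u w]|)%:R
                  else - ((adj u v : nat)%:R)).

(* quotient matrix: (Q_L)_{ij} = sum_{v in pi_j} L_{uv} for a chosen u in pi_i
   (matrix indices i : 'I_k stand for parts i+1) *)
Definition quot_mx (R : nzRingType) (alpha : nat -> nat) (k n : nat)
    (L : 'M[R]_n) : 'M[R]_k :=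
  \matrix_(i, j)
    match [pick u : 'I_n | in_part alpha i.+1 u] with
    | Some u => \sum_(v : 'I_n | in_part alpha j.+1 v) L u v
    | None => 0
    end.

(* Main.v *)
Require Import Defs.
From mathcomp Require Import all_boot all_order all_algebra zify ring.
Import Order.TTheory GRing.Theory Num.Theory.
Local Open Scope ring_scope.

Lemma apsum0 alpha : apsum alpha 0 = 0%N.
Proof. by rewrite /apsum big_geq. Qed.

Lemma apsumS alpha i : apsum alpha i.+1 = (apsum alpha i + alpha i.+1)%N.
Proof. by rewrite /apsum big_nat_recr. Qed.

Lemma apsum_mono alpha i j : (i <= j)%N -> (apsum alpha i <= apsum alpha j)%N.
Proof.
elim: j => [|j IH]; first by rewrite leqn0 => /eqP->.
rewrite leq_eqVlt => /orP[/eqP->//|/IH]. rewrite apsumS. lia.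
Qed.

Lemma in_part_uniq alpha i j v :
  in_part alpha i v -> in_part alpha j v -> i = j.
Proof.
rewrite /in_part.
wlog lt: i j / (i < j)%N.
  move=> W Hi Hj; case: (ltngtP i j) => [h|h|//]; first exact: W.
  by symmetry; apply: W.
move=> /andP[_ Hi] /andP[Hj _].
have := @apsum_mono alpha i j.-1 ltac:(lia). lia.
Qed.

Definition Pidx alpha k v : nat :=
  (find (fun i => v < apsum alpha i.+1)%N (iota 0 k)).+1.

Arguments Pidx : simpl never.
Lemma Pidx_spec alpha k v : (v < apsum alpha k)%N ->
  [/\ (1 <= Pidx alpha k v)%N, (Pidx alpha k v <= k)%N & in_part alpha (Pidx alpha k v) v].
Proof.
move=> vlt.
have k0 : (0 < k)%N by case: k vlt => //; rewrite apsum0.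
have hs : has (fun i => v < apsum alpha i.+1)%N (iota 0 k).
  apply/hasP; exists k.-1; first by rewrite mem_iota; lia.
  by rewrite prednK.
have fk : (find (fun i => v < apsum alpha i.+1)%N (iota 0 k) < k)%N.
  by rewrite -[X in (_ < X)%N](size_iota 0 k) -has_find.
rewrite /Pidx; split => //.
have := nth_find 0 hs; rewrite nth_iota // add0n => h2.
rewrite /in_part /= h2 andbT.
move: fk h2; case E: find => [|f] //=; first by rewrite apsum0.
move=> fk _.
have := before_find 0 (_ : (f < find (fun i => v < apsum alpha i.+1)%N (iota 0 k))%N).
rewrite E => /(_ (leqnn _)). rewrite nth_iota; last lia.
by rewrite add0n => /negbT; rewrite -leqNgt.
Qed.
Arguments Pidx_spec {alpha k v}.
Arguments in_part_uniq {alpha i j v}.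
Lemma sum_parts (R : nzRingType) alpha k (g : nat -> R) k' : (k' <= k)%N ->
  \sum_(0 <= v < apsum alpha k') g (Pidx alpha k v) =
  \sum_(1 <= j < k'.+1) (alpha j)%:R * g j.
Proof.
elim: k' => [|k' IH] Hk.
  by rewrite apsum0 !big_geq.
rewrite (big_cat_nat _ (n:=apsum alpha k')) //=; last by rewrite apsumS leq_addr.
rewrite IH; last lia.
rewrite [in RHS]big_nat_recr //=; congr (_ + _).
have -> : \sum_(apsum alpha k' <= i < apsum alpha k'.+1) g (Pidx alpha k i) =
          \sum_(apsum alpha k' <= i < apsum alpha k'.+1) g k'.+1.
  apply: eq_big_nat => v /andP[v1 v2].
  have vk : (v < apsum alpha k)%N.
    by apply: (leq_trans v2); apply: apsum_mono.
  have [_ _ hp] := Pidx_spec vk.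
  have hq : in_part alpha k'.+1 v by rewrite /in_part /= v1 v2.
  by rewrite (in_part_uniq hp hq).
rewrite sumr_const_nat apsumS.
by rewrite addKn mulr_natl.
Qed.

Lemma cadjE alpha k (u v : 'I_(apsum alpha k)) :
  @cadj alpha k (apsum alpha k) u v =
  (u != v) && part_rel (Pidx alpha k u) (Pidx alpha k v).
Proof.
rewrite /cadj; case: (u != v) => //=.
have [u1 uk hu] := Pidx_spec (ltn_ord u).
have [v1 vk hv] := Pidx_spec (ltn_ord v).
apply/existsP/idP.
  case=> i /existsP[j /and3P[hi hj hr]].
  by rewrite (in_part_uniq hu hi) (in_part_uniq hv hj).
move=> hr.
have iu : ((Pidx alpha k u).-1 < k)%N by lia.
have iv : ((Pidx alpha k v).-1 < k)%N by lia.
exists (Ordinal iu); apply/existsP; exists (Ordinal iv).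
have e1 : (nat_of_ord (Ordinal iu)).+1 = Pidx alpha k u by exact: (prednK u1).
have e2 : (nat_of_ord (Ordinal iv)).+1 = Pidx alpha k v by exact: (prednK v1).
by rewrite e1 e2 hu hv hr.
Qed.

Lemma lap_mulE (R : nzRingType) alpha k (c : nat -> R) (u : 'I_(apsum alpha k)) :
  (@laplacian R _ (@cadj alpha k (apsum alpha k)) *m
     \col_(v < apsum alpha k) c (Pidx alpha k v)) u 0 =
  \sum_(1 <= j < k.+1) (alpha j)%:R *
     ((part_rel (Pidx alpha k u) j)%:R * (c (Pidx alpha k u) - c j)).
Proof.
set n := apsum alpha k.
set A := @cadj alpha k n.
have Auu : A u u = false by rewrite /A cadjE eqxx.
have deg : (#|[set w | A u w]|%:R : R) = \sum_v (A u v)%:R.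
  rewrite -natr_sum; congr (_%:R).
  rewrite cardsE -sum1_card big_mkcond /=.
  apply: eq_bigr => v _.
  by change ((if A u v then 1%N else 0%N) = A u v); case: (A u v).
rewrite mxE /laplacian.
transitivity (\sum_v (A u v)%:R * (c (Pidx alpha k u) - c (Pidx alpha k v))).
  rewrite (bigD1 u) //= [in RHS](bigD1 u) //= !mxE eqxx Auu mul0r add0r deg.
  rewrite big_distrl /= (bigD1 u) //= Auu mul0r add0r.
  rewrite -big_split /=.
  apply: eq_bigr => v vu; rewrite !mxE eq_sym (negbTE vu) mulrBr mulNr.
  by [].
set g := fun j => (part_rel (Pidx alpha k u) j)%:R * (c (Pidx alpha k u) - c j).
transitivity (\sum_(v < n) g (Pidx alpha k v)).
  apply: eq_bigr => v _; rewrite /A cadjE /g.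
  case: (eqVneq u v) => [->|_]; first by rewrite !subrr !mulr0.
  by [].
by rewrite -(big_mkord xpredT (fun v => g (Pidx alpha k v))) sum_parts.
Qed.

Lemma char_poly_tr (R : comNzRingType) n (A : 'M[R]_n) : char_poly A^T = char_poly A.
Proof.
rewrite /char_poly -det_tr; congr (\det _); apply/matrixP => i j.
by rewrite /char_poly_mx !mxE eq_sym.
Qed.

Lemma lap_sym (R : nzRingType) alpha k :
  (@laplacian R _ (@cadj alpha k (apsum alpha k)))^T =
  @laplacian R _ (@cadj alpha k (apsum alpha k)).
Proof.
apply/matrixP => u v; rewrite !mxE eq_sym.
case: eqP => [->//|_]; rewrite !cadjE eq_sym /part_rel [Pidx _ _ v == _]eq_sym; by case: (eqVneq (Pidx alpha k u) (Pidx alpha k v)) => [->|_]; rewrite ?[maxn (Pidx _ _ v) _]maxnC.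
Qed.

Lemma part_nonempty alpha k i : (forall i, (1 <= i <= k)%N -> (0 < alpha i)%N) ->
  (i < k)%N -> (apsum alpha i < apsum alpha k)%N /\ in_part alpha i.+1 (apsum alpha i).
Proof.
move=> apos ik; have := apos i.+1 ltac:(lia); have := @apsum_mono alpha i.+1 k ik.
rewrite /in_part /= apsumS; lia.
Qed.
Arguments part_nonempty {alpha k i}.

Lemma eig_lemma (R : fieldType) alpha k (c : nat -> R) (lam : R) :
  (forall i, (1 <= i <= k)%N -> (0 < alpha i)%N) -> (0 < k)%N ->
  (forall a, (1 <= a <= k)%N ->
     \sum_(1 <= j < k.+1) (alpha j)%:R * ((part_rel a j)%:R * (c a - c j)) = lam * c a) ->
  c 1%N != 0 ->
  eigenvalue (@laplacian R _ (@cadj alpha k (apsum alpha k))) lam /\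
  root (char_poly (@quot_mx R alpha k (apsum alpha k)
          (@laplacian R _ (@cadj alpha k (apsum alpha k))))) lam.
Proof.
move=> apos k0 Hc c1.
set n := apsum alpha k.
set L := @laplacian R _ (@cadj alpha k n).
set x : 'cV[R]_n := \col_(v < n) c (Pidx alpha k v).
have HLx : L *m x = lam *: x.
  apply/matrixP => u j; rewrite (ord1 j) lap_mulE [RHS]mxE mxE.
  have [p1 pk _] := Pidx_spec (ltn_ord u).
  by apply: Hc; rewrite p1 pk.
have [n0 in0] := part_nonempty apos k0.
rewrite apsum0 in n0 in0.
have P0 : Pidx alpha k 0 = 1%N.
  have [_ _ h] := Pidx_spec n0.
  exact: in_part_uniq h in0.
split.
  apply/eigenvalueP; exists x^T.
    by rewrite /L -lap_sym -trmx_mul -/L HLx linearZ.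
  apply/eqP => /matrixP /(_ 0 (Ordinal n0)); rewrite !mxE /= P0 => h.
  by move: c1; rewrite h eqxx.
set Q := quot_mx _ _ _.
set y : 'cV[R]_k := \col_(i < k) c i.+1.
have HQy : Q *m y = lam *: y.
  apply/matrixP => i j; rewrite (ord1 j) !mxE.
  under eq_bigr do rewrite !mxE.
  case: pickP => [u hu|none]; last first.
    have [ik ip] := part_nonempty apos (ltn_ord i).
    by move: (none (Ordinal ik)); rewrite ip.
  have [p1 pk hp] := Pidx_spec (ltn_ord u).
  have Pu : Pidx alpha k u = i.+1 := in_part_uniq hp hu.
  have := congr1 (fun M : 'M[R]_(n,1) => M u 0) HLx.
  rewrite /= !mxE Pu => <-.
  under eq_bigr do rewrite big_distrl /=.
  rewrite (exchange_big_dep xpredT) //=.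
  apply: eq_bigr => v _; rewrite [x v 0]mxE.
  have [q1 qk hq] := Pidx_spec (ltn_ord v).
  have jk : ((Pidx alpha k v).-1 < k)%N by lia.
  have e1 : (nat_of_ord (Ordinal jk)).+1 = Pidx alpha k v by exact: (prednK q1).
  rewrite (bigD1 (Ordinal jk)) /=; last by rewrite e1.
  rewrite e1 big1 ?addr0 // => j2 /andP[hj jne].
  have := in_part_uniq hj hq; rewrite -e1 => - [ej].
  by move: jne; rewrite (_ : j2 = Ordinal jk) ?eqxx //; apply: val_inj.
rewrite -char_poly_tr -eigenvalue_root_char.
apply/eigenvalueP; exists y^T.
  by rewrite -trmx_mul HQy linearZ.
apply/eqP => /matrixP /(_ 0 (Ordinal k0)); rewrite !mxE /= => h.
by move: c1; rewrite h eqxx.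
Qed.

Definition Esum alpha k t : nat :=
  (\sum_(t.+1 <= l < k.+1) (if odd l then 0 else alpha l))%N.

Definition mu alpha k m : nat :=
  (Esum alpha k m.+1 + (if odd m then apsum alpha m.+1 else 0))%N.

Definition cvec (R : nzRingType) alpha m (j : nat) : R :=
  if (j <= m)%N then (alpha m.+1)%:R
  else if j == m.+1 then - (apsum alpha m)%:R else 0.

Lemma split3 (R : nzRingType) (F : nat -> R) m k : (m < k)%N ->
  \sum_(1 <= j < k.+1) F j =
  \sum_(1 <= j < m.+1) F j + F m.+1 + \sum_(m.+2 <= j < k.+1) F j.
Proof.
move=> mk; rewrite (big_cat_nat _ (n:=m.+1)) //=; last lia.
by rewrite [in X in _ + X]big_ltn ?addrA //; lia.
Qed.

Lemma part_rel_lt a j : (a < j)%N -> part_rel a j = ~~ odd j.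
Proof. move=> h; rewrite /part_rel ifN; last by rewrite neq_ltn h. by rewrite (maxn_idPr (ltnW h)). Qed.

Lemma part_rel_gt a j : (j < a)%N -> part_rel a j = ~~ odd a.
Proof. move=> h; rewrite /part_rel ifN; last by rewrite neq_ltn h orbT. by rewrite (maxn_idPl (ltnW h)). Qed.

Lemma sum_const_alpha (R : nzRingType) alpha m (X : R) :
  \sum_(1 <= j < m.+1) (alpha j)%:R * X = (apsum alpha m)%:R * X.
Proof. by rewrite -big_distrl /= -natr_sum. Qed.

Lemma sum_E (R : nzRingType) alpha k m (X : R) :
  \sum_(m.+2 <= j < k.+1) (if odd j then 0 else alpha j)%:R * X = (Esum alpha k m.+1)%:R * X.
Proof. by rewrite -big_distrl /= -natr_sum. Qed.
Arguments split3 {R} F {m k}.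

Lemma cvec_eig (R : fieldType) alpha k m a : (1 <= m)%N -> (m < k)%N -> (1 <= a <= k)%N ->
  \sum_(1 <= j < k.+1) (alpha j)%:R *
     ((part_rel a j)%:R * (cvec R alpha m a - cvec R alpha m j)) =
  (mu alpha k m)%:R * cvec R alpha m a.
Proof.
move=> m1 mk ak; rewrite (split3 _ mk).
set A : R := (alpha m.+1)%:R; set S : R := (apsum alpha m)%:R.
set E : R := (Esum alpha k m.+1)%:R.
have muE : (mu alpha k m)%:R = E + (odd m)%:R * (S + A) :> R.
  rewrite /mu natrD; congr (_ + _).
  by case: (odd m); rewrite /= ?mul1r ?mul0r // apsumS natrD.
rewrite muE.
have cm1 : cvec R alpha m m.+1 = - S by rewrite /cvec ltnn eqxx.
case: (leqP a m) => [am|ma].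
- have ca : cvec R alpha m a = A by rewrite /cvec am.
  rewrite ca cm1 part_rel_lt; last lia.
  rewrite big_nat big1 ?add0r; last first.
    by move=> j /andP[_ jm]; rewrite /cvec (_ : (j <= m)%N) ?subrr ?mulr0 //; lia.
  rewrite (eq_big_nat _ _ (F2 := fun j => (if odd j then 0 else alpha j)%:R * A)); last first.
    move=> j /andP[j1 j2]; rewrite part_rel_lt; last lia.
    rewrite /cvec ifF; last lia. rewrite ifF; last lia.
    by case: (odd j); rewrite /= ?mul0r ?mulr0 ?mul1r ?subr0.
  rewrite sum_E oddS -/E.
  by case: (odd m); rewrite /= ?mul1r ?mul0r ?mulr0 ?add0r ?addr0; ring.
case: (eqVneq a m.+1) => [->|am1].
- rewrite cm1 subrr !mulr0 addr0.
  rewrite big_nat (eq_bigr (fun j => (alpha j)%:R * ((odd m)%:R * (- S - A)))); last first.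
    move=> j /andP[_ jm]; rewrite part_rel_gt // oddS negbK /cvec (_ : (j <= m)%N) //; lia.
  rewrite -big_nat sum_const_alpha.
  rewrite (eq_big_nat _ _ (F2 := fun j => (if odd j then 0 else alpha j)%:R * (- S))); last first.
    move=> j /andP[j1 j2]; rewrite part_rel_lt; last lia.
    rewrite /cvec ifF; last lia. rewrite ifF; last lia.
    by case: (odd j); rewrite /= ?mul0r ?mulr0 ?mul1r ?subr0 ?sub0r.
  rewrite sum_E -/E -/S.
  by case: (odd m); rewrite /= ?mul1r ?mul0r ?mulr0 ?add0r ?addr0; ring.
have ca : cvec R alpha m a = 0 by rewrite /cvec ifF ?(negbTE am1) //; lia.
rewrite ca cm1 part_rel_gt; last lia.
rewrite big_nat (eq_bigr (fun j => (alpha j)%:R * ((~~ odd a)%:R * (0 - A)))); last first.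
  move=> j /andP[_ jm]; rewrite part_rel_gt; last lia.
  by rewrite /cvec (_ : (j <= m)%N) //; lia.
rewrite -big_nat sum_const_alpha.
rewrite big_nat big1 ?addr0; last first.
  move=> j /andP[j1 j2]; rewrite /cvec ifF; last lia. rewrite ifF; last lia.
  by rewrite subrr !mulr0.
rewrite mulr0.
by case: (~~ odd a); rewrite /= ?mul1r ?mul0r ?mulr0 ?add0r ?addr0; ring.
Qed.

Lemma ones_eig (R : fieldType) alpha k a :
  \sum_(1 <= j < k.+1) (alpha j)%:R *
     ((part_rel a j)%:R * ((fun _ => 1 : R) a - (fun _ => 1 : R) j)) = 0 * (fun _ => 1 : R) a.
Proof. by rewrite mul0r big1 // => j _; rewrite subrr !mulr0. Qed.

Lemma Esum_ge alpha k t : (k <= t)%N -> Esum alpha k t = 0%N.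
Proof. by move=> h; rewrite /Esum big_geq //; lia. Qed.

Lemma Esum_step alpha k t : (t < k)%N ->
  Esum alpha k t = ((if odd t.+1 then 0 else alpha t.+1) + Esum alpha k t.+1)%N.
Proof. by move=> h; rewrite /Esum big_ltn //; lia. Qed.

Lemma Esum_odd alpha k t : odd t.+1 -> Esum alpha k t = Esum alpha k t.+1.
Proof.
move=> o; case: (ltnP t k) => h; first by rewrite Esum_step // o.
by rewrite !Esum_ge //; lia.
Qed.

Lemma mu_recA alpha k m : ~~ odd m -> (m.+2 <= k)%N ->
  mu alpha k m = (mu alpha k m.+2 + alpha m.+2)%N.
Proof.
move=> ev mk; rewrite /mu /= (negbTE ev) !addn0.
rewrite Esum_step; last lia.
rewrite /= (negbTE ev) Esum_odd /=; last by rewrite negbK.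
lia.
Qed.

Lemma mu_recB alpha k m : odd m -> (m.+3 <= k)%N ->
  mu alpha k m.+2 = (mu alpha k m + alpha m.+2)%N.
Proof.
move=> od mk; rewrite /mu /= od /=.
rewrite (@Esum_odd _ _ m.+1) /=; last by rewrite negbK.
rewrite (@Esum_step _ _ m.+2) /=; last lia.
rewrite od !apsumS /=. lia.
Qed.

Definition lamN alpha k i : nat :=
  if (i <= k./2)%N then mu alpha k (k - 2 * i + 2) else mu alpha k (2 * i - k - 1).

Lemma lamN_recA alpha k i : ~~ odd k -> (2 <= i <= k./2)%N ->
  lamN alpha k i = (lamN alpha k i.-1 + alpha (k - 2 * (i - 2)))%N.
Proof.
move=> ev hi.
have kE : k = (k./2).*2 by rewrite -[LHS]odd_double_half (negbTE ev).
rewrite /lamN ifT; last lia. rewrite ifT; last lia.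
have e1 : (k - 2 * i.-1 + 2 = (k - 2 * i + 2).+2)%N by lia.
have e2 : (k - 2 * (i - 2) = (k - 2 * i + 2).+2)%N by lia.
rewrite e1 e2 mu_recA //; last lia.
have -> : (k - 2 * i + 2 = (k./2 - i + 1).*2)%N by lia.
by rewrite odd_double.
Qed.

Lemma lamN_recB alpha k i : ~~ odd k -> (k./2.+1 <= i <= k.-1)%N ->
  lamN alpha k i.+1 = (lamN alpha k i + alpha (2 * i - (k - 1)))%N.
Proof.
move=> ev hi.
have kE : k = (k./2).*2 by rewrite -[LHS]odd_double_half (negbTE ev).
rewrite /lamN ifF; last lia. rewrite ifF; last lia.
have e1 : (2 * i.+1 - k - 1 = (2 * i - k - 1).+2)%N by lia.
have e2 : (2 * i - (k - 1) = (2 * i - k - 1).+2)%N by lia.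
rewrite e1 e2 mu_recB //; last lia.
have -> : (2 * i - k - 1 = (i - k./2 - 1).*2.+1)%N by lia.
by rewrite /= odd_double.
Qed.

Lemma lamN_lt alpha k i : (2 <= k)%N -> ~~ odd k ->
  (forall i, (1 <= i <= k)%N -> (0 < alpha i)%N) -> (1 <= i < k)%N ->
  (lamN alpha k i < lamN alpha k i.+1)%N.
Proof.
move=> k2 ev apos hi.
have kE : k = (k./2).*2 by rewrite -[LHS]odd_double_half (negbTE ev).
case: (ltngtP i k./2) => h.
- have h2 : (2 <= i.+1 <= k./2)%N by lia.
  rewrite (@lamN_recA alpha k i.+1 ev h2) /=.
  have h3 : (1 <= k - 2 * (i.+1 - 2) <= k)%N by lia.
  have := apos _ h3. lia.
- have h2 : (k./2.+1 <= i <= k.-1)%N by lia.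
  rewrite (@lamN_recB alpha k i ev h2).
  have h3 : (1 <= 2 * i - (k - 1) <= k)%N by lia.
  have := apos _ h3. lia.
- rewrite /lamN ifT; last lia. rewrite ifF; last lia.
  have -> : (k - 2 * i + 2 = 2)%N by lia.
  have -> : (2 * i.+1 - k - 1 = 1)%N by lia.
  rewrite /mu /= (@Esum_odd _ _ 2) // !apsumS apsum0.
  have h1 : (1 <= 1 <= k)%N by lia.
  have := apos _ h1. lia.
Qed.

Lemma lamN_1 alpha k : (2 <= k)%N -> ~~ odd k -> lamN alpha k 1 = 0%N.
Proof.
move=> k2 ev; rewrite /lamN ifT; last by have := odd_double_half k; rewrite (negbTE ev); lia.
have -> : (k - 2 * 1 + 2 = k)%N by lia.
by rewrite /mu Esum_ge // (negbTE ev) addn0.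
Qed.

Lemma lamN_k alpha k : (2 <= k)%N -> ~~ odd k -> lamN alpha k k = apsum alpha k.
Proof.
move=> k2 ev.
have kE : k = (k./2).*2 by rewrite -[LHS]odd_double_half (negbTE ev).
rewrite /lamN ifF; last lia.
have -> : (2 * k - k - 1 = (k./2 - 1).*2.+1)%N by lia.
rewrite /mu /= odd_double /=.
have -> : ((k./2 - 1).*2.+2 = k)%N by lia.
by rewrite Esum_ge.
Qed.

Lemma lamN_mu alpha k i : (2 <= k)%N -> ~~ odd k -> (2 <= i <= k)%N ->
  exists2 m, (1 <= m < k)%N & lamN alpha k i = mu alpha k m.
Proof.
move=> k2 ev hi.
have kE : k = (k./2).*2 by rewrite -[LHS]odd_double_half (negbTE ev).
rewrite /lamN; case: ifP => h.
  by exists (k - 2 * i + 2)%N => //; lia.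
by exists (2 * i - k - 1)%N => //; lia.
Qed.

Lemma eig_all (R : realFieldType) alpha k i : (2 <= k)%N -> ~~ odd k ->
  (forall i, (1 <= i <= k)%N -> (0 < alpha i)%N) -> (1 <= i <= k)%N ->
  eigenvalue (@laplacian R _ (@cadj alpha k (apsum alpha k))) (lamN alpha k i)%:R /\
  root (char_poly (@quot_mx R alpha k (apsum alpha k)
          (@laplacian R _ (@cadj alpha k (apsum alpha k))))) (lamN alpha k i)%:R.
Proof.
move=> k2 ev apos hi.
have k0 : (0 < k)%N by lia.
case: (eqVneq i 1%N) => [->|i1].
  rewrite lamN_1 //; apply: (@eig_lemma R alpha k (fun _ => 1)) => //.
    by move=> a _; rewrite ones_eig.
  exact: oner_neq0.
have [m hm ->] := @lamN_mu alpha k i k2 ev ltac:(lia).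
apply: (@eig_lemma R alpha k (cvec R alpha m)) => //.
  move=> a ha; apply: cvec_eig => //; lia.
rewrite /cvec ifT; last lia.
rewrite pnatr_eq0 -lt0n; apply: apos; lia.
Qed.

Lemma lamN_mono alpha k i j : (2 <= k)%N -> ~~ odd k ->
  (forall i, (1 <= i <= k)%N -> (0 < alpha i)%N) -> (1 <= i)%N -> (i < j)%N -> (j <= k)%N ->
  (lamN alpha k i < lamN alpha k j)%N.
Proof.
move=> k2 ev apos i1; elim: j => [//|j IH] ij jk.
have := @lamN_lt alpha k j k2 ev apos.
case: (ltngtP i j) => h.
- move=> /(_ ltac:(lia)); have := IH h ltac:(lia). lia.
- lia.
- by rewrite h => /(_ ltac:(lia)).
Qed.

Theorem theorem2p1 (R : realFieldType) (k : nat) (alpha : nat -> nat) :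
  (2 <= k)%N -> ~~ odd k -> (forall i, (1 <= i <= k)%N -> (0 < alpha i)%N) ->
  let n := apsum alpha k in
  let L : 'M[R]_n := @laplacian R n (@cadj alpha k n) in
  let Q : 'M[R]_k := @quot_mx R alpha k n L in
  exists lam : nat -> R,
    [/\ (forall i, (1 <= i < k)%N -> lam i <= lam i.+1),
        char_poly Q = \prod_(1 <= i < k.+1) ('X - (lam i)%:P),
        (lam 1%N = 0 /\ lam k = n%:R),
        ((forall i, (2 <= i <= k./2)%N ->
            lam i = lam i.-1 + (alpha (k - 2 * (i - 2))%N)%:R) /\
        (forall i, (k./2.+1 <= i <= k.-1)%N ->
            lam i = lam i.+1 - (alpha (2 * i - (k - 1))%N)%:R)) &
        (forall i, (1 <= i <= k)%N -> eigenvalue L (lam i))].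
Proof.
move=> k2 ev apos n L Q.
exists (fun i => (lamN alpha k i)%:R); split.
- move=> i hi; rewrite ler_nat; apply: ltnW; exact: lamN_lt.
- set rs := [seq (lamN alpha k i)%:R : R | i <- iota 1 k].
  have allr : all (root (char_poly Q)) rs.
    apply/allP => z /mapP[i]; rewrite mem_iota => hi ->.
    have [] := @eig_all R alpha k i k2 ev apos ltac:(lia) => _ //.
  have urs : uniq rs.
    rewrite map_inj_in_uniq ?iota_uniq // => i j; rewrite !mem_iota => hi hj /eqP.
    rewrite eqr_nat => /eqP e.
    case: (ltngtP i j) => h //.
      by have := @lamN_mono alpha k i j k2 ev apos ltac:(lia) h ltac:(lia); rewrite e ltnn.
    by have := @lamN_mono alpha k j i k2 ev apos ltac:(lia) h ltac:(lia); rewrite e ltnn.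
  have urs' : uniq_roots rs by rewrite uniq_rootsE.
  have [q hq] := uniq_roots_prod_XsubC allr urs'.
  have dv : (\prod_(z <- rs) ('X - z%:P) %| char_poly Q)%R by rewrite hq dvdp_mulIr.
  have sz : size (\prod_(z <- rs) ('X - z%:P)) == size (char_poly Q).
    by rewrite size_prod_XsubC size_char_poly size_map size_iota.
  rewrite dvdp_size_eqp // eqp_monic ?monic_prod_XsubC ?char_poly_monic // in sz.
  rewrite -(eqP sz) big_map /index_iota subn1 //.
- split; first by rewrite lamN_1.
  by rewrite lamN_k.
- split.
    by move=> i hi; rewrite (@lamN_recA alpha k i ev hi) natrD.
  move=> i hi; rewrite (@lamN_recB alpha k i ev hi) natrD addrK //.
- move=> i hi; have [] := @eig_all R alpha k i k2 ev apos hi => //.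
Qed.
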